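(* Let $X$ be a (Tychonoff) space. (a) If $X$ is a finite $C$-space and $Y\subset X$ is $C^*$-embedded in $X$, then $Y$ is a finite $C$-space. (b) $X$ is a finite $C$-space if and only if its Čech–Stone compactification $\beta X$ is a $C$-space.
   Context: A set is functionally open if it is a cozero set. $Y\subset X$ is $C^*$-embedded if every bounded continuous real function on $Y$ extends to a bounded continuous function on $X$. $X$ is a $C$-space if every sequence $\{\omega_n\}$ of locally finite covers of $X$ by functionally open sets has a $C$-refinement $\{\gamma_n\}$ (each $\gamma_n$ a disjoint family of open sets refining $\omega_n$, with $\bigcup_n\gamma_n$ covering $X$) such that $\bigcup_n\gamma_n$ is a locally finite cover of $X$ by functionally open sets. $X$ is a finite $C$-space if for every sequence $\{\omega_n\}$ of finite covers of $X$ by functionally open sets there exist $k$ and finite families $\gamma_1,\dots,\gamma_k$ of pairwise disjoint functionally open sets such that each $\gamma_n$ refines $\omega_n$ and $\bigcup_{n=1}^k\gamma_n$ covers $X$. *)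

(* Defs.v *)
From HB Require Import structures.
From mathcomp Require Import all_boot all_order all_algebra.
From mathcomp Require Import all_classical all_reals topology normedtype.
Set Implicit Arguments.
Unset Strict Implicit.
Unset Printing Implicit Defensive.
Import Order.TTheory GRing.Theory Num.Theory.
Import numFieldNormedType.Exports.
Local Open Scope classical_set_scope.
Local Open Scope ring_scope.

Section CSpaces.
Variable R : realType.

Definition tychonoff_space (X : topologicalType) : Prop :=
  completely_regular_space X /\ hausdorff_space X.

Definition functionally_open {X : topologicalType} (U : set X) : Prop :=
  exists f : X -> R, continuous f /\ U = [set x | f x != 0].

Definition bounded_real {T : Type} (f : T -> R) : Prop :=
  exists M : R, forall x, `|f x| <= M.

Definition C_star_embedded {Z : topologicalType} (Y : set Z) : Prop :=
  forall f : set_type Y -> R, continuous f -> bounded_real f ->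
    exists g : Z -> R, [/\ continuous g, bounded_real g &
                          forall y : set_type Y, g (set_val y) = f y].

Definition is_cover {X : Type} (F : set (set X)) : Prop :=
  forall x, exists A, F A /\ A x.

Definition locally_finite_family {X : topologicalType} (F : set (set X)) : Prop :=
  forall x : X, exists N : set X, nbhs x N /\ finite_set [set A | F A /\ A `&` N !=set0].

Definition refines {X : Type} (G F : set (set X)) : Prop :=
  forall A, G A -> exists B, F B /\ A `<=` B.

Definition pairwise_disjoint_family {X : Type} (G : set (set X)) : Prop :=
  forall A B, G A -> G B -> A <> B -> A `&` B = set0.

Definition C_space (X : topologicalType) : Prop :=
  forall omega : nat -> set (set X),
    (forall n, [/\ is_cover (omega n), locally_finite_family (omega n) &
                   forall A, omega n A -> functionally_open A]) ->
    exists gamma : nat -> set (set X),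
      (forall n, [/\ pairwise_disjoint_family (gamma n),
                     (forall A, gamma n A -> open A) &
                     refines (gamma n) (omega n)]) /\
      (let U := [set A | exists n, gamma n A] in
       [/\ is_cover U, locally_finite_family U &
           forall A, U A -> functionally_open A]).

(** [X] is a finite C-space (families indexed by [n < k], i.e. gamma_0 ..
    gamma_(k-1) instead of gamma_1 .. gamma_k). *)
Definition finite_C_space (X : topologicalType) : Prop :=
  forall omega : nat -> set (set X),
    (forall n, [/\ finite_set (omega n), is_cover (omega n) &
                   forall A, omega n A -> functionally_open A]) ->
    exists (k : nat) (gamma : nat -> set (set X)),
      (forall n, (n < k)%N ->
         [/\ finite_set (gamma n), pairwise_disjoint_family (gamma n),
             (forall A, gamma n A -> functionally_open A) &
             refines (gamma n) (omega n)]) /\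
      is_cover [set A | exists2 n, (n < k)%N & gamma n A].

Definition top_embedding {X K : topologicalType} (e : X -> K) : Prop :=
  [/\ continuous e, injective e &
      forall U : set X, open U -> exists V : set K, open V /\ e @^-1` V = U].

Definition is_stone_cech {X K : topologicalType} (e : X -> K) : Prop :=
  [/\ compact [set: K], hausdorff_space K, top_embedding e,
      dense (range e) & C_star_embedded (range e)].

End CSpaces.

(* Main.v *)
Require Import Defs.
From HB Require Import structures.
From mathcomp Require Import all_boot all_order all_algebra.
From mathcomp Require Import all_classical all_reals topology normedtype.
From mathcomp Require Import finmap.
From mathcomp Require Import lra.
Set Implicit Arguments.
Unset Strict Implicit.
Unset Printing Implicit Defensive.
Import Order.TTheory GRing.Theory Num.Theory.
Import numFieldNormedType.Exports.
Local Open Scope classical_set_scope.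
Local Open Scope ring_scope.

Definition pK (K : topologicalType) (k : K) : Type := K.
HB.instance Definition _ (K : topologicalType) (k : K) := Topological.copy (@pK K k) K.
HB.instance Definition _ (K : topologicalType) (k : K) := isPointed.Build (@pK K k) k.
Lemma compact_coverT (K : topologicalType) : compact [set: K] -> cover_compact [set: K].
Proof.
case: (pselect (exists k : K, True)) => [[k _]|nK] cK; last first.
  move=> I D f _ _; exists fset0 => // x; exfalso; apply: nK; by exists x.
have : compact [set: @pK K k] by exact: cK.
rewrite compact_cover; exact.
Qed.

Section Aux.
Variable R : realType.

Lemma fo_bounded (T : topologicalType) (A : set T) :
  functionally_open R A -> exists f : T -> R,
    [/\ continuous f, forall x, 0 <= f x <= 1 & A = [set x | f x != 0]].
Proof.
move=> [f [cf ->]].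
exists (fun x => Num.min `|f x| 1); split.
- apply: (@min_fun_continuous _ _ R (fun x => `|f x|) (fun=> 1)).
    by move=> x; apply: continuous_comp; [exact: cf|exact: norm_continuous].
  exact: cst_continuous.
- by move=> x; rewrite le_min normr_ge0 ler01 ge_min lexx orbT.
- apply/seteqP; split => x /=.
    move=> fx0; rewrite neq_lt; apply/orP; right.
    by rewrite lt_min normr_gt0 fx0 ltr01.
  by apply: contra => /eqP ->; rewrite normr0 min_l ?ler01.
Qed.

Lemma sum_continuous (T : topologicalType) (I : Type) (s : seq I)
  (F : I -> T -> R) : (forall i, continuous (F i)) ->
  continuous (fun x => \sum_(i <- s) F i x).
Proof.
move=> cF; elim: s => [|i s IH].
  under eq_fun do rewrite big_nil; exact: cst_continuous.
under eq_fun do rewrite big_cons.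
by move=> x; apply: continuousD; [exact: cF|exact: IH].
Qed.

Lemma normalize (T : topologicalType) (I : choiceType) (P : set I)
  (f : I -> T -> R) :
  finite_set P -> (forall i, continuous (f i)) -> (forall i x, 0 <= f i x) ->
  (forall x, exists2 i, P i & f i x != 0) ->
  exists g : I -> T -> R, [/\ forall i, continuous (g i),
     forall i x, 0 <= g i x, forall i, P i -> forall x, g i x <= 1,
     forall i x, (g i x != 0) = (f i x != 0) &
     forall x, \sum_(i <- fset_set P) g i x = 1].
Proof.
move=> fP cf f0 cov.
pose S x := \sum_(i <- fset_set P) f i x.
have S0 x : 0 <= S x by apply: sumr_ge0 => i _; exact: f0.
have fS i x : P i -> f i x <= S x.
  move=> Pi; have Pin : i \in fset_set P by rewrite in_fset_set //; exact/mem_set.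
  rewrite /S (bigD1_seq i Pin (fset_uniq _)) /=.
  by rewrite lerDl; apply: sumr_ge0 => j _; exact: f0.
have Sgt0 x : 0 < S x.
  have [i Pi fi] := cov x.
  by apply: (lt_le_trans _ (fS i x Pi)); rewrite lt_neqAle eq_sym fi f0.
exists (fun i x => f i x / S x); split.
- move=> i x; apply: (@continuousM _ _ (f i) (fun x => (S x)^-1)); first exact: cf.
  apply: continuousV; first by rewrite gt_eqF.
  exact: (@sum_continuous T I (fset_set P) f cf x).
- by move=> i x; rewrite divr_ge0.
- by move=> i Pi x; rewrite ler_pdivrMr // mul1r; exact: fS.
- by move=> i x; rewrite mulf_eq0 invr_eq0 (gt_eqF (Sgt0 x)) orbF.
- by move=> x; rewrite -mulr_suml -/(S x) divff // gt_eqF.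
Qed.

Lemma dense_ge (X : Type) (K : topologicalType) (e : X -> K) (F : K -> R) (a : R) :
  dense (range e) -> continuous F -> (forall x, a <= F (e x)) ->
  forall p, a <= F p.
Proof.
move=> de cF ha p; rewrite leNgt; apply/negP => Fpa.
have [z [/= Fz [x _ exz]]] :
    (F @^-1` [set y | y < a]) `&` range e !=set0.
  apply: de; first by exists p.
  by move/continuousP : cF; apply; exact: open_lt.
by move: Fz; rewrite -exz ltNge ha.
Qed.

Lemma dense_eq0 (X : Type) (K : topologicalType) (e : X -> K) (F : K -> R) :
  dense (range e) -> continuous F -> (forall x, F (e x) = 0) ->
  forall p, F p = 0.
Proof.
move=> de cF h0 p.
have := @dense_ge X K e (fun p => - `|F p|) 0 de.
have cF' : continuous (fun p => - `|F p|).
  move=> q; apply: (@continuousN _ R^o _ (fun p => `|F p|)); apply: continuous_comp; [exact: cF|exact: norm_continuous].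
move=> /(_ cF') H.
have H2 : forall x, 0 <= - `|F (e x)| by move=> x; rewrite h0 normr0 oppr0.
by have := H H2 p; rewrite oppr_ge0 normr_le0 => /eqP.
Qed.
Lemma choose_fo (T : topologicalType) (w : set (set T)) :
  (forall A, w A -> functionally_open R A) ->
  exists f : set T -> T -> R, [/\ forall A, continuous (f A),
    forall A x, 0 <= f A x <= 1 & forall A, w A -> A = [set x | f A x != 0]].
Proof.
move=> fo.
have : forall A, exists fA : T -> R, [/\ continuous fA,
    forall x, 0 <= fA x <= 1 & w A -> A = [set x | fA x != 0]].
  move=> A; case: (pselect (w A)) => wA.
    have [fA [cfA bfA eA]] := fo_bounded (fo A wA).
    by exists fA; split.
  exists (fun=> 0); split => //; first exact: cst_continuous.
  by move=> x; rewrite lexx ler01.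
move=> /choice [f hf]; exists f; split.
- by move=> A; have [] := hf A.
- by move=> A; have [] := hf A.
- by move=> A; have [_ _] := hf A; apply.
Qed.

Lemma pull (X S : topologicalType) (phi : X -> S) : continuous phi ->
  (forall f : X -> R, continuous f -> bounded_real f ->
     exists g : S -> R, continuous g /\ forall x, g (phi x) = f x) ->
  finite_C_space R S -> finite_C_space R X.
Proof.
move=> cphi ext fCS om hom.
case: (pselect (exists x : X, True)) => [[x0 _]|nX]; last first.
  exists 0%N, (fun=> set0); split => [n //|x].
  by exfalso; apply: nX; exists x.
have H1 : forall n, exists w : set (set S), [/\ finite_set w, is_cover w,
    (forall A, w A -> functionally_open R A) &
    forall B, w B -> exists A, om n A /\ phi @^-1` B `<=` A].
  move=> n; have [fin cov fo] := hom n.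
  have [f [cf bf ef]] := choose_fo fo.
  have [||g [cg g0 g1 gf gs]] := @normalize X _ (om n) f fin cf.
  - by move=> A x; have /andP[] := bf A x.
  - move=> x; have [A [omA Ax]] := cov x.
    by exists A => //; move: Ax; rewrite {1}(ef A omA).
  have : forall A, exists G : S -> R, continuous G /\
      (om n A -> forall x, G (phi x) = g A x).
    move=> A; case: (pselect (om n A)) => omA.
      have [|G [cG eG]] := ext (g A) (cg A).
        by exists 1 => x; rewrite ger0_norm ?g0 // g1.
      by exists G; split.
    by exists (fun=> 0); split => //; exact: cst_continuous.
  move=> /choice [G hG].
  pose SG s := \sum_(A <- fset_set (om n)) G A s.
  have SGphi x : SG (phi x) = 1.
    rewrite -(gs x) /SG big_seq [RHS]big_seq; apply: eq_bigr => A.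
    rewrite in_fset_set // => /set_mem omA.
    by have [_ ->] := hG A.
  exists ([set [set s | G A s != 0] | A in om n] `|` [set [set s | SG s != 1]]).
  split.
  - rewrite finite_setU; split; first exact: finite_image.
    exact: finite_set1.
  - move=> s; case: (pselect (exists2 A, om n A & G A s != 0)).
      move=> [A omA GA]; exists [set s | G A s != 0]; split => //.
      by left; exists A.
    move=> nA; exists [set s | SG s != 1]; split; first by right.
    rewrite /= /SG big_seq big1; first by rewrite eq_sym oner_neq0.
    move=> A; rewrite in_fset_set // => /set_mem omA.
    apply/eqP; apply: contra_notT nA => GA; exists A => //.
  - move=> B [[A omA <-]|->].
      by exists (G A); split => //; have [] := hG A.
    exists (fun s => SG s - 1); split.
      move=> s; apply: continuousB; last exact: cst_continuous.
      exact: (@sum_continuous S _ (fset_set (om n)) G (fun A => (hG A).1)).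
    by apply/seteqP; split => s /=; rewrite subr_eq0.
  - move=> B [[A omA <-]|->].
      exists A; split => // x /=; rewrite (proj2 (hG A) omA) gf.
      by rewrite {2}(ef A omA).
    have [A [omA _]] := cov x0.
    by exists A; split => // x /=; rewrite SGphi eqxx.
have /choice [w hw] := H1.
have [|k [gam [hgam gcov]]] := fCS w.
  by move=> n; have [] := hw n.
exists k, (fun n => [set phi @^-1` B | B in gam n]); split.
  move=> n nk; have [gfin gdis gfo gref] := hgam n nk; split.
  - exact: finite_image.
  - move=> _ _ [B gB <-] [C gC <-] BC.
    have BC' : B <> C by move=> eBC; apply: BC; rewrite eBC.
    by rewrite -preimage_setI (gdis _ _ gB gC BC') preimage_set0.
  - move=> _ [B gB <-]; have [h [ch eh]] := gfo B gB.
    exists (h \o phi); split; first by move=> x; apply: continuous_comp; [exact: cphi|exact: ch].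
    by rewrite eh.
  - move=> _ [B gB <-]; have [B' [wB' BB']] := gref B gB.
    have [_ _ _ href] := hw n.
    have [A [omA sA]] := href B' wB'.
    exists A; split => // x /= Bx; apply: sA; exact: BB'.
move=> x; have [B [[n nk gB] Bx]] := gcov (phi x).
by exists (phi @^-1` B); split => //; exists n => //; exists B.
Qed.
Lemma partA (X : topologicalType) (Y : set X) :
  C_star_embedded R Y -> finite_C_space R X -> finite_C_space R (set_type Y).
Proof.
move=> cs; apply: (@pull _ X set_val).
  exact: initial_continuous.
move=> f cf bf; have [g [cg _ eg]] := cs f cf bf.
by exists g; split.
Qed.

Lemma sc_ext (X K : topologicalType) (e : X -> K) : is_stone_cech R e ->
  forall f : X -> R, continuous f -> bounded_real f ->
  exists g : K -> R, continuous g /\ forall x, g (e x) = f x.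
Proof.
move=> [_ _ [ce ie emb] de cstar] f cf [M bM].
have : forall y : set_type (range e), exists x, e x = set_val y.
  move=> y; have := set_valP y; rewrite /= => -[x _ ex]; by exists x.
move=> /choice [psi hpsi].
have cf' : continuous (f \o psi).
  apply/continuousP => B oB.
  have [V [oV eV]] := emb (f @^-1` B) (proj1 (continuousP f) cf B oB).
  exists V => //; apply/seteqP; split => y /=.
    move=> Vy; have : (e @^-1` V) (psi y) by rewrite /= hpsi.
    by rewrite eV.
  by move=> Bf; have : (f @^-1` B) (psi y) by []; rewrite -eV /= hpsi.
have [|g [cg _ eg]] := cstar (f \o psi) cf'.
  by exists M => y; exact: bM.
exists g; split => // x.
pose y := @exist _ (fun z => z \in range e) (e x) (mem_set (imageT e x)).
have := eg y; rewrite /= => ->; congr f; apply: ie; rewrite hpsi //.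
Qed.
Lemma fo_open (T : topologicalType) (A : set T) :
  functionally_open R A -> open A.
Proof.
move=> [f [cf ->]].
exact: (proj1 (continuousP f) cf _ (@open_neq R 0)).
Qed.

Lemma C_to_fC (K : topologicalType) : compact [set: K] ->
  C_space R K -> finite_C_space R K.
Proof.
move=> cK cs om hom.
have [|gam [hgam [Ucov Ulf Ufo]]] := cs om.
  move=> n; have [fin cov fo] := hom n; split => // x.
  exists setT; split; first exact: filterT.
  by apply: sub_finite_set fin => A [].
have {}cK := compact_coverT cK.
have [||D' D'U cD'] := cK (set K) [set A | exists n, gam n A] id.
- by move=> A UA; apply: fo_open; exact: Ufo.
- by move=> x _; have [A [UA Ax]] := Ucov x; exists A.
have : forall A, exists n, (exists n, gam n A) -> gam n A.
  move=> A; case: (pselect (exists n, gam n A)) => [[n gA]|nA].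
    by exists n.
  by exists 0%N.
move=> /choice [nA hnA].
exists (\max_(A <- D') nA A).+1, (fun n => [set A | A \in D' /\ gam n A]).
split.
  move=> n nk; have [gdis gop gref] := hgam n; split.
  - by apply: (@finite_subfset _ D') => A [].
  - by move=> A B [_ gA] [_ gB]; exact: gdis.
  - by move=> A [_ gA]; apply: Ufo; exists n.
  - by move=> A [_ gA]; exact: gref.
move=> x; have [A D'A Ax] := cD' x I.
have UA : exists n, gam n A by have := D'U A D'A; move/set_mem.
exists A; split => //; exists (nA A).
  by rewrite ltnS; apply: (@leq_bigmax_seq _ _ xpredT).
by split => //; exact: hnA.
Qed.
Lemma fC_to_C (K : topologicalType) : compact [set: K] ->
  finite_C_space R K -> C_space R K.
Proof.
move=> cK fC om hom.
have {}cK := compact_coverT cK.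
pose om' n := [set A | om n A /\ A !=set0].
have fin n : finite_set (om' n).
  have [cov lf fo] := hom n.
  have /choice [N hN] := lf.
  have [||D' _ cD'] := cK K setT (fun x => interior (N x)).
  - by move=> x _; exact: open_interior.
  - by move=> x _; exists x => //; exact: (proj1 (hN x)).
  apply: (@sub_finite_set _ _ (\bigcup_(x in [set` D'])
      [set A | om n A /\ A `&` N x !=set0])).
    move=> A [omA [a Aa]]; have [x D'x Nxa] := cD' a I.
    exists x => //; split => //; exists a; split => //.
    exact: interior_subset.
  apply: bigcup_finite; first exact: finite_fset.
  by move=> x _; exact: (proj2 (hN x)).
have [|k [gam [hgam gcov]]] := fC om'.
  move=> n; have [cov lf fo] := hom n; split; first exact: fin.
  - move=> x; have [A [omA Ax]] := cov x; exists A; split => //.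
    by split => //; exists x.
  - by move=> A [omA _]; exact: fo.
have finU : finite_set [set A | exists2 n, (n < k)%N & gam n A].
  apply: (@sub_finite_set _ _ (\bigcup_(n in `I_k) gam n)).
    by move=> A [n nk gA]; exists n.
  apply: bigcup_finite; first exact: finite_II.
  by move=> n nk; have [] := hgam n nk.
exists (fun n => if (n < k)%N then gam n else set0); split.
  move=> n; case: ifP => nk; last by split => // A.
  have [_ gdis gfo gref] := hgam n nk; split => //.
  - by move=> A gA; apply: fo_open; exact: gfo.
  - move=> A gA; have [B [[omB _] AB]] := gref A gA.
    by exists B.
have eU : [set A | exists n, (if (n < k)%N then gam n else set0) A] =
    [set A | exists2 n, (n < k)%N & gam n A].
  apply/seteqP; split => A /=.
    by move=> [n]; case: ifP => nk // gA; exists n.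
  by move=> [n nk gA]; exists n; rewrite nk.
rewrite /= eU; split => //.
- move=> x; exists setT; split; first exact: filterT.
  by apply: sub_finite_set finU => A [].
- move=> A [n]; case: ifP => nk // gA; have [_ _ gfo _] := hgam n nk; exact: gfo.
Qed.
Lemma sum_le_const (I : eqType) (s : seq I) (F : I -> R) (c : R) :
  (forall i, i \in s -> F i <= c) -> \sum_(i <- s) F i <= c *+ size s.
Proof.
elim: s => [|i s IH] hF; first by rewrite big_nil mulr0n.
rewrite big_cons /= mulrS; apply: lerD.
  by apply: hF; rewrite mem_head.
by apply: IH => j js; apply: hF; rewrite in_cons js orbT.
Qed.

Lemma max0_eq0 (t : R) : (Order.max t 0 == 0) = (t <= 0).
Proof.
by case: (leP t 0) => t0; rewrite ?eqxx // gt_eqF.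
Qed.

Lemma max0_ge (t : R) : t <= Order.max t 0.
Proof. by rewrite le_max lexx. Qed.

Lemma max0_ge0 (t : R) : 0 <= Order.max t 0.
Proof. by rewrite le_max lexx orbT. Qed.

Lemma max0_le1 (t : R) : t <= 1 -> Order.max t 0 <= 1.
Proof. by move=> t1; rewrite ge_max t1 ler01. Qed.

Lemma cont_max0 (T : topologicalType) (F : T -> R) :
  continuous F -> continuous (fun x => Order.max (F x) 0).
Proof.
move=> cF; apply: (@max_fun_continuous _ _ R F (fun=> 0)) => //.
exact: cst_continuous.
Qed.
Lemma push (X K : topologicalType) (e : X -> K) : is_stone_cech R e ->
  finite_C_space R X -> finite_C_space R K.
Proof.
move=> sc fCX om hom.
have [_ _ [ce _ _] de _] := sc.
have ext := sc_ext sc.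
have /choice [h hh] : forall n, exists h : set K -> K -> R,
    [/\ forall B, continuous (h B), forall B p, 0 <= h B p,
     forall B, om n B -> forall p, h B p <= 1,
     forall B, om n B -> B = [set p | h B p != 0] &
     forall p, \sum_(B <- fset_set (om n)) h B p = 1].
  move=> n; have [fin cov fo] := hom n.
  have [f [cf bf ef]] := choose_fo fo.
  have [||g [cg g0 g1 gf gs]] := normalize fin cf.
  - by move=> A x; have /andP[] := bf A x.
  - move=> x; have [A [omA Ax]] := cov x.
    by exists A => //; move: Ax; rewrite {1}(ef A omA).
  exists g; split => // B omB.
  rewrite {1}(ef B omB); apply/seteqP; split => p /=; by rewrite gf.
pose c n : R := ((size (fset_set (om n))).+1%:R)^-1.
have c0 n : 0 < c n by rewrite invr_gt0 ltr0n.
have hcov n p : exists2 B, om n B & c n < h n B p.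
  case: (pselect (exists2 B, om n B & c n < h n B p)) => // nB; exfalso.
  have [_ _ _ _ hs] := hh n.
  have : \sum_(B <- fset_set (om n)) h n B p <= c n *+ size (fset_set (om n)).
    apply: sum_le_const => B; rewrite in_fset_set; last by have [] := hom n.
    move=> /set_mem omB; rewrite leNgt; apply/negP => hB; apply: nB.
    by exists B.
  rewrite hs -mulr_natl; apply/negP; rewrite -ltNge.
  by rewrite ltr_pdivrMr ?ltr0n // mul1r ltr_nat.
pose V n B := [set x | c n < h n B (e x)].
have foV n B : functionally_open R (V n B).
  exists (fun x => Order.max (h n B (e x) - c n) 0); split.
    apply: cont_max0 => x; apply: (@continuousB _ R^o _ (fun x => h n B (e x)) (fun=> c n)); last exact: cst_continuous.
    apply: (@continuous_comp _ _ _ e (h n B)); first exact: ce.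
    by have [hc _ _ _ _] := hh n; exact: hc.
  by apply/seteqP; split => x /=; rewrite max0_eq0 subr_le0 -ltNge.
have [|k [gam [hgam gcov]]] := fCX (fun n => [set V n B | B in om n]).
  move=> n; split.
  - by apply: finite_image; have [] := hom n.
  - move=> x; have [B omB hB] := hcov n (e x).
    by exists (V n B); split => //; exists B.
  - by move=> _ [B _ <-].
have /choice [Bs hBs] : forall q : nat * set X, exists B, (q.1 < k)%N ->
    gam q.1 q.2 -> om q.1 B /\ q.2 `<=` V q.1 B.
  move=> [n A]; case: (pselect ((n < k)%N /\ gam n A)) => [[nk gA]|nP];
    last by exists set0 => nk gA; exfalso; apply: nP.
  have [_ _ _ gref] := hgam n nk.
  have [_ [[B omB <-] AB]] := gref A gA.
  by exists B.
pose P := [set q : nat * set X | (q.1 < k)%N /\ gam q.1 q.2].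
have finP : finite_set P.
  apply: (@sub_finite_set _ _ (\bigcup_(n in `I_k) [set (n, A) | A in gam n])).
    by move=> [n A] [/= nk gA]; exists n => //; exists A.
  apply: bigcup_finite; first exact: finite_II.
  by move=> n nk; apply: finite_image; have [] := hgam n nk.
have [f [cf bf ef]] := @choose_fo X [set A | exists2 n, (n < k)%N & gam n A]
  (fun A => fun '(ex_intro2 n nk gA) => let: And4 _ _ fo _ := hgam n nk in fo A gA).
have [||g [cg g0 g1 gf gs]] := @normalize X _ P (fun q => f q.2) finP
  (fun q => cf q.2).
- by move=> q x; have /andP[] := bf q.2 x.
- move=> x; have [A [[n nk gA] Ax]] := gcov x.
  exists (n, A) => //; move: Ax; rewrite {1}(ef A); last by exists n.
  by [].
pose M := (\max_(i < k) size (fset_set (om i))).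
pose L : R := (M.+1%:R)^-1.
have L0 : 0 < L by rewrite invr_gt0 ltr0n.
have Lc n : (n < k)%N -> L <= c n.
  move=> nk; rewrite lef_pV2 ?posrE ?ltr0n // ler_nat ltnS.
  exact: (@leq_bigmax _ (fun i : 'I_k => size (fset_set (om i))) (Ordinal nk)).
pose G q x := g q x * Order.max (h q.1 (Bs q) (e x) - c q.1 / 2) 0.
have cG q : continuous (G q).
  move=> x; apply: (@continuousM _ _ (g q) (fun x => Order.max (h q.1 (Bs q) (e x) - c q.1 / 2) 0)).
    exact: cg.
  apply: cont_max0 => y; apply: (@continuousB _ R^o _ (fun x => h q.1 (Bs q) (e x)) (fun=> c q.1 / 2)); last exact: cst_continuous.
  apply: (@continuous_comp _ _ _ e (h q.1 (Bs q))); first exact: ce.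
  by have [hc _ _ _ _] := hh q.1; exact: hc.
have /choice [Gh hGh] : forall q, exists Gh : K -> R, continuous Gh /\
    (P q -> forall x, Gh (e x) = G q x).
  move=> q; case: (pselect (P q)) => Pq; last first.
    by exists (fun=> 0); split => //; exact: cst_continuous.
  have [omB _] := hBs q Pq.1 Pq.2.
  have [|Gq [cGq eGq]] := ext (G q) (cG q).
    exists 1 => x; rewrite /G normrM !ger0_norm ?max0_ge0 ?g0 //.
    apply: mulr_ile1; [exact: g0|exact: max0_ge0|exact: g1|].
    apply: max0_le1; rewrite lerBlDr; apply: ler_wpDr.
      by rewrite divr_ge0 ?ltW.
    by have [_ _ h1 _ _] := hh q.1; exact: h1.
  by exists Gq.
have gA q x : P q -> g q x != 0 -> q.2 x.
  move=> Pq gq; have wq : exists2 n, (n < k)%N & gam n q.2.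
    by exists q.1; case: Pq.
  by rewrite (ef q.2 wq) /= -gf.
exists k, (fun n => [set [set p | Gh (n, A) p != 0] | A in gam n]); split.
  move=> n nk; have [gfin gdis gfo gref] := hgam n nk; split.
  - exact: finite_image.
  - move=> _ _ [A gA' <-] [A' gA'' <-] neq.
    have AA' : A <> A' by move=> eAA; apply: neq; rewrite eAA.
    have PA : P (n, A) by [].
    have PA' : P (n, A') by [].
    have Z := @dense_eq0 X K e (fun p => Gh (n, A) p * Gh (n, A') p) de.
    have {}Z : forall p, Gh (n, A) p * Gh (n, A') p = 0.
      apply: Z.
        by move=> p; apply: (@continuousM _ _ (Gh (n, A)) (Gh (n, A'))); [exact: (hGh (n, A)).1|exact: (hGh (n, A')).1].
      move=> x; rewrite (proj2 (hGh _) PA) (proj2 (hGh _) PA') /G.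
      have [g1x|/negPn/eqP->] := boolP (g (n, A) x != 0); last by rewrite !mul0r.
      have [g2x|/negPn/eqP->] := boolP (g (n, A') x != 0); last by rewrite mul0r mulr0.
      have := gdis _ _ gA' gA'' AA'; rewrite -subset0 => /(_ x); case.
      by split; [exact: (gA _ _ PA g1x)|exact: (gA _ _ PA' g2x)].
    rewrite -subset0 => p [/= a b]; move: (Z p) => /eqP.
    by rewrite mulf_eq0 (negbTE a) (negbTE b).
  - move=> _ [A gA' <-]; exists (Gh (n, A)); split => //.
    exact: (hGh (n, A)).1.
  - move=> _ [A gA' <-]; have [omB AV] := hBs (n, A) nk gA'.
    exists (Bs (n, A)); split => //.
    have PA : P (n, A) by [].
    have Z := @dense_eq0 X K e (fun p => Gh (n, A) p *
      Order.max (c n / 2 - h n (Bs (n, A)) p) 0) de.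
    have {}Z : forall p, Gh (n, A) p * Order.max (c n / 2 - h n (Bs (n, A)) p) 0 = 0.
      apply: Z.
        move=> p; apply: (@continuousM _ _ (Gh (n, A)) (fun p => Order.max (c n / 2 - h n (Bs (n, A)) p) 0)); first exact: (hGh (n, A)).1.
        apply: cont_max0 => y; apply: (@continuousB _ R^o _ (fun=> c n / 2) (h n (Bs (n, A)))); first exact: cst_continuous.
        by have [hc _ _ _ _] := hh n; exact: hc.
      move=> x; rewrite (proj2 (hGh _) PA) /G.
      have [g1x|/negPn/eqP->] := boolP (g (n, A) x != 0); last by rewrite !mul0r.
      have Vx := AV x (gA _ _ PA g1x).
      apply/eqP; rewrite mulf_eq0; apply/orP; right.
      rewrite max0_eq0 subr_le0; apply: ltW; apply: (lt_trans _ Vx).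
      by rewrite ltr_pdivrMr // ltr_pMr // ltr1n.
    move=> p /= Ghp; have [_ _ _ hB _] := hh n; rewrite (hB _ omB) /=.
    move: (Z p) => /eqP; rewrite mulf_eq0 (negbTE Ghp) /= max0_eq0 subr_le0.
    move=> H; rewrite gt_eqF //; apply: lt_le_trans H.
    by rewrite divr_gt0.
move=> p.
pose F p := \sum_(q <- fset_set P) Gh q p.
have cF : continuous F.
  exact: (@sum_continuous K _ (fset_set P) Gh (fun q => (hGh q).1)).
have FL := @dense_ge X K e F (L / 2) de cF.
have {}FL : forall p, L / 2 <= F p.
  apply: FL => x; rewrite /F big_seq.
  rewrite (eq_bigr (fun q => G q x)); last first.
    move=> q; rewrite in_fset_set // => /set_mem Pq; exact: (proj2 (hGh q) Pq).
  apply: (@le_trans _ _ (\sum_(q <- fset_set P | q \in fset_set P) g q x * (L / 2))).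
    by rewrite -mulr_suml -big_seq gs mul1r.
  apply: ler_sum => q; rewrite in_fset_set // => /set_mem Pq.
  have [gx|/negPn/eqP gx0] := boolP (g q x != 0); last by rewrite /G gx0 !mul0r.
  rewrite /G; apply: ler_wpM2l; first exact: g0.
  apply: le_trans (max0_ge _).
  have Vx := (hBs q Pq.1 Pq.2).2 x (gA _ _ Pq gx).
  have Lq := Lc q.1 Pq.1.
  move: Vx; rewrite /V /= => Vx.
  lra.
have [[n A] qP Gq] : exists2 q, q \in fset_set P & Gh q p != 0.
  case: (pselect (exists2 q, q \in fset_set P & Gh q p != 0)) => // nq; exfalso.
  move: (FL p); rewrite /F big_seq big1 => [|q qP]; last first.
    by apply/eqP; apply: contra_notT nq => Gq; exists q.
  by rewrite leNgt divr_gt0.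
have [nk gA'] : P (n, A) by move: qP; rewrite in_fset_set // => /set_mem.
exists [set p | Gh (n, A) p != 0]; split => //.
by exists n => //; exists A.
Qed.
End Aux.

Unset Implicit Arguments.

Theorem proposition2p2 (R : realType) (X : topologicalType) (hX : tychonoff_space X) :
  (finite_C_space R X ->
     forall Y : set X, C_star_embedded R Y -> finite_C_space R (set_type Y)) /\
  (forall (K : topologicalType) (e : X -> K), is_stone_cech R e ->
     (finite_C_space R X <-> C_space R K)).
Proof.
split.
  by move=> fCX Y cs; exact: partA cs fCX.
move=> K e sc; have [cK _ [ce _ _] _ _] := sc; split.
  by move=> fCX; apply: fC_to_C cK _; exact: push sc fCX.
move=> CK; apply: (pull ce (sc_ext sc)).
exact: C_to_fC cK CK.
Qed.
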